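(* Let $A$ be a $C^*$-algebra and let $J \subset A$ be a closed right ideal. If $J$ is topologically essential, then $J$ is essential.
   Context: A closed right ideal $J$ of a $C^*$-algebra $A$ is called topologically essential if for every nonzero closed right ideal $K \subset A$ one has $J \cap K \neq \{0\}$. It is called essential if for every nonzero right ideal $I \subset A$ (not necessarily closed; a right ideal here means a linear subspace $I$ with $IA \subset I$) one has $J \cap I \neq \{0\}$. *)

(* Defs.v *)
From mathcomp Require Import all_boot all_order all_algebra.
From mathcomp Require Import all_classical all_reals all_analysis.
From mathcomp Require Import complex.
Set Implicit Arguments. Unset Strict Implicit. Unset Printing Implicit Defensive.
Import Order.TTheory GRing.Theory Num.Theory.
Import numFieldNormedType.Exports.
Local Open Scope classical_set_scope.
Local Open Scope ring_scope.

Record is_cstar_algebra (R : realType) (A : completeNormedModType (complex R))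
    (mul : A -> A -> A) (star : A -> A) : Prop := {
  cs_mulA : forall x y z, mul x (mul y z) = mul (mul x y) z;
  cs_mulDl : forall x y z, mul (x + y) z = mul x z + mul y z;
  cs_mulDr : forall x y z, mul x (y + z) = mul x y + mul x z;
  cs_mulZl : forall (a : complex R) x y, mul (a *: x) y = a *: mul x y;
  cs_mulZr : forall (a : complex R) x y, mul x (a *: y) = a *: mul x y;
  cs_norm_mul : forall x y, `|mul x y| <= `|x| * `|y|;
  cs_starK : forall x, star (star x) = x;
  cs_starD : forall x y, star (x + y) = star x + star y;
  cs_starZ : forall (a : complex R) x, star (a *: x) = (a^*)%C *: star x;
  cs_starM : forall x y, star (mul x y) = mul (star y) (star x);
  cs_cstar : forall x, `|mul (star x) x| = `|x| ^+ 2 }.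

Definition right_ideal (R : realType) (A : completeNormedModType (complex R))
    (mul : A -> A -> A) (I : set A) : Prop :=
  I 0 /\ (forall x y, I x -> I y -> I (x + y)) /\
  (forall (a : complex R) x, I x -> I (a *: x)) /\
  (forall x a, I x -> I (mul x a)).

Definition closed_right_ideal (R : realType) (A : completeNormedModType (complex R))
    (mul : A -> A -> A) (I : set A) : Prop :=
  right_ideal mul I /\ closed I.

Definition nonzero_set (R : realType) (A : completeNormedModType (complex R))
  (I : set A) : Prop := exists x, I x /\ x <> 0.

Definition meets_nontrivially (R : realType) (A : completeNormedModType (complex R))
  (J K : set A) : Prop := exists x, J x /\ K x /\ x <> 0.

Definition topologically_essential (R : realType) (A : completeNormedModType (complex R))
    (mul : A -> A -> A) (J : set A) : Prop :=
  forall K : set A, closed_right_ideal mul K -> nonzero_set K -> meets_nontrivially J K.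

Definition essential (R : realType) (A : completeNormedModType (complex R))
    (mul : A -> A -> A) (J : set A) : Prop :=
  forall I : set A, right_ideal mul I -> nonzero_set I -> meets_nontrivially J I.

(* Main.v *)
Require Import Defs.
From mathcomp Require Import all_boot all_order all_algebra.
From mathcomp Require Import all_classical all_reals all_analysis.
From mathcomp Require Import complex.
From mathcomp Require Import ring lra.
Set Implicit Arguments. Unset Strict Implicit. Unset Printing Implicit Defensive.
Import Order.TTheory GRing.Theory Num.Theory.
Import numFieldNormedType.Exports.
Local Open Scope classical_set_scope.
Local Open Scope ring_scope.
Local Open Scope complex_scope.

Section Conv.
Variables (R : realType) (A : completeNormedModType (complex R)).
Local Notation C := (complex R).

Lemma posC_real (e : C) : 0 < e -> e = (complex.Re e)%:C /\ 0 < complex.Re e.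
Proof.
move=> e0; have := e0; rewrite ltcE /= => /andP[/eqP hi hr].
case: e e0 hi hr => a b /= _ hi hr; split => //.
by rewrite hi.
Qed.

Lemma majorant_cvg (d : nat -> A) (r : nat -> R) (B : R) :
  (forall n, r n <= r n.+1) -> (forall n, r n <= B) ->
  (forall k, `|d k| <= (r k.+1 - r k)%:C) -> cvgn (series d).
Proof.
move=> rinc rB hd.
have rnd : {homo r : n m / (n <= m)%N >-> n <= m}.
  by apply/nondecreasing_seqP.
have rcvg : cvgn r.
  by apply: nondecreasing_is_cvgn => //; exists B => _ [n _ <-].
pose del := fun k => r k.+1 - r k.
have sd : series del = (fun n => r n - r 0%N).
  by apply/funext => n; rewrite /series /= telescope_sumr.
have cd : cvgn (series del).
  by rewrite sd; apply: is_cvgB => //; exact: is_cvg_cst.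
move/cauchy_cvgP: cd => /cauchy_seriesP cd.
apply/cauchy_cvgP/cauchy_seriesP => e e0.
have [eE eR] := posC_real e0.
move: (cd _ eR); apply: filterS => -[m n] /= h.
rewrite eE; apply: le_lt_trans (ler_norm_sum _ _ _) _.
apply: le_lt_trans (ler_sum _ (fun k _ => hd k)) _.
rewrite -rmorph_sum ltcR; apply: le_lt_trans h.
exact: ler_norm.
Qed.

End Conv.

Section Basic.
Variables (R : realType) (A : completeNormedModType (complex R)).
Variables (mul : A -> A -> A) (star : A -> A).
Hypothesis HA : is_cstar_algebra mul star.
Local Notation "a ∗ b" := (mul a b) (at level 40, left associativity).
Local Notation C := (complex R).

Lemma mA x y z : x ∗ (y ∗ z) = x ∗ y ∗ z.
Proof. exact: (cs_mulA HA). Qed.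
Lemma mDl x y z : (x + y) ∗ z = x ∗ z + y ∗ z. Proof. exact: (cs_mulDl HA). Qed.
Lemma mDr x y z : x ∗ (y + z) = x ∗ y + x ∗ z. Proof. exact: (cs_mulDr HA). Qed.
Lemma mZl (a : C) x y : (a *: x) ∗ y = a *: (x ∗ y). Proof. exact: (cs_mulZl HA). Qed.
Lemma mZr (a : C) x y : x ∗ (a *: y) = a *: (x ∗ y). Proof. exact: (cs_mulZr HA). Qed.
Lemma m0l x : 0 ∗ x = 0.
Proof. by apply: (@addrI _ (0 ∗ x)); rewrite -mDl !addr0. Qed.
Lemma m0r x : x ∗ 0 = 0.
Proof. by apply: (@addrI _ (x ∗ 0)); rewrite -mDr !addr0. Qed.
Lemma mNl x y : (- x) ∗ y = - (x ∗ y).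
Proof. by apply: (@addrI _ (x ∗ y)); rewrite -mDl !subrr m0l. Qed.
Lemma mNr x y : x ∗ (- y) = - (x ∗ y).
Proof. by apply: (@addrI _ (x ∗ y)); rewrite -mDr !subrr m0r. Qed.
Lemma mBl x y z : (x - y) ∗ z = x ∗ z - y ∗ z. Proof. by rewrite mDl mNl. Qed.
Lemma mBr x y z : x ∗ (y - z) = x ∗ y - x ∗ z. Proof. by rewrite mDr mNr. Qed.
Lemma sK x : star (star x) = x. Proof. exact: (cs_starK HA). Qed.
Lemma sD x y : star (x + y) = star x + star y. Proof. exact: (cs_starD HA). Qed.
Lemma sM x y : star (x ∗ y) = star y ∗ star x. Proof. exact: (cs_starM HA). Qed.
Lemma sZ (a : C) x : star (a *: x) = (a^*)%C *: star x. Proof. exact: (cs_starZ HA). Qed.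
Lemma s0 : star 0 = 0.
Proof. by apply: (@addrI _ (star 0)); rewrite -sD !addr0. Qed.
Lemma sN x : star (- x) = - star x.
Proof. by apply: (@addrI _ (star x)); rewrite -sD !subrr s0. Qed.
Lemma sB x y : star (x - y) = star x - star y. Proof. by rewrite sD sN. Qed.
Lemma norm_mul x y : `|x ∗ y| <= `|x| * `|y|. Proof. exact: (cs_norm_mul HA). Qed.
Lemma cstar x : `|star x ∗ x| = `|x| ^+ 2. Proof. exact: (cs_cstar HA). Qed.

Lemma norm_star_le x : `|x| <= `|star x|.
Proof.
have [->|x0] := eqVneq x 0; first by rewrite normr0.
have : `|x| ^+ 2 <= `|star x| * `|x| by rewrite -cstar norm_mul.
by rewrite expr2 ler_pM2r // normr_gt0.
Qed.
Lemma norm_star x : `|star x| = `|x|.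
Proof. by apply/le_anti; rewrite norm_star_le -{2}(sK x) norm_star_le. Qed.

Lemma star_inj x : star x = 0 -> x = 0.
Proof. by move=> h; rewrite -(sK x) h s0. Qed.

Lemma norm_sa x : star x = x -> `|x ∗ x| = `|x| ^+ 2.
Proof. by move=> sx; rewrite -{1}sx cstar. Qed.


Lemma cvg_mull a (u : nat -> A) l : u @ \oo --> l -> (fun n => a ∗ u n) @ \oo --> a ∗ l.
Proof.
move=> /cvgrPdist_lt ul; apply/cvgrPdist_lt => e e0.
have k0 : 0 < `|a| + 1 by rewrite ltr_wpDl.
move: (ul _ (divr_gt0 e0 k0)); apply: filterS => n hn.
rewrite -mBr; apply: le_lt_trans (norm_mul _ _) _.
apply: (@le_lt_trans _ _ ((`|a| + 1) * `|l - u n|)).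
  by rewrite ler_wpM2r // lerDl.
by rewrite mulrC -ltr_pdivlMr.
Qed.

Lemma cvg_mulr a (u : nat -> A) l : u @ \oo --> l -> (fun n => u n ∗ a) @ \oo --> l ∗ a.
Proof.
move=> /cvgrPdist_lt ul; apply/cvgrPdist_lt => e e0.
have k0 : 0 < `|a| + 1 by rewrite ltr_wpDl.
move: (ul _ (divr_gt0 e0 k0)); apply: filterS => n hn.
rewrite -mBl; apply: le_lt_trans (norm_mul _ _) _.
apply: (@le_lt_trans _ _ (`|l - u n| * (`|a| + 1))).
  by rewrite ler_wpM2l // lerDl.
by rewrite -ltr_pdivlMr.
Qed.

Lemma cvg_star (u : nat -> A) l : u @ \oo --> l -> (fun n => star (u n)) @ \oo --> star l.
Proof.
move=> /cvgrPdist_lt ul; apply/cvgrPdist_lt => e e0.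
by move: (ul _ e0); apply: filterS => n hn; rewrite -sB norm_star.
Qed.

Lemma cvg_mul (u w : nat -> A) a b : u @ \oo --> a -> w @ \oo --> b ->
  (fun n => u n ∗ w n) @ \oo --> a ∗ b.
Proof.
move=> ua wb.
have -> : (fun n => u n ∗ w n) = (fun n => u n ∗ b + u n ∗ (w n - b)).
  by apply/funext => n; rewrite mBr addrC subrK.
rewrite -[a ∗ b]addr0; apply: cvgD; first exact: cvg_mulr.
have k0 : 0 < `|a| + 1 by rewrite ltr_wpDl.
apply/cvgrPdist_lt => e e0; near=> n.
rewrite sub0r normrN; apply: le_lt_trans (norm_mul _ _) _.
have hu : `|u n| <= `|a| + 1.
  by near: n; apply: (cvgr_norm_le _ ua); rewrite ltrDl.
have hw : `|b - w n| < e / (`|a| + 1).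
  by near: n; move/cvgrPdist_lt: wb; apply; exact: divr_gt0.
rewrite distrC in hw.
apply: (@le_lt_trans _ _ ((`|a| + 1) * `|w n - b|)).
  by rewrite ler_wpM2r.
by rewrite mulrC -ltr_pdivlMr.
Unshelve. all: by end_near.
Qed.

Lemma lim_norm_le (u : nat -> A) l (c : C) : 0 <= c -> u @ \oo --> l ->
  (forall n, `|u n| <= c) -> `|l| <= c.
Proof.
move=> c0 ul hu; rewrite real_leNgt ?ger0_real //; apply/negP => lc.
have [n _ hn] := cvgr_norm_gt _ ul _ lc.
by have := lt_le_trans (hn n (leqnn n)) (hu n); rewrite ltxx.
Qed.

Lemma cvg_eq (u : nat -> A) (l l' : A) : u @ \oo --> l -> u @ \oo --> l' -> l = l'.
Proof. move=> h1 h2; exact: (cvg_unique _ h1 h2). Qed.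

End Basic.

Section Sqrt.
Variables (R : realType) (A : completeNormedModType (complex R)).
Variables (mul : A -> A -> A) (star : A -> A).
Hypothesis HA : is_cstar_algebra mul star.
Local Notation "a ∗ b" := (mul a b) (at level 40, left associativity).
Local Notation C := (complex R).
Variables (f v' : A) (B : R).
Hypothesis B0 : 0 <= B.
Hypothesis hB : `|v'| <= B%:C.
Hypothesis hv : `|f ∗ v'| <= 1.
Local Notation v := (f ∗ v').
Local Notation hf := ((2%:R)^-1 : C).

Fixpoint Gs n := if n is n.+1 then hf *: (v' + Gs n ∗ (f ∗ Gs n)) else 0.
Definition Es n := f ∗ Gs n.
Fixpoint es n : R := if n is n.+1 then (1 + es n ^+ 2) / 2 else 0.
Fixpoint rs n : R := if n is n.+1 then B / 2 + (B * es n + rs n) / 2 else 0.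

Lemma es_ge0 n : 0 <= es n.
Proof. elim: n => //= n ih; rewrite expr2; nra. Qed.
Lemma es_le1 n : es n <= 1.
Proof. elim: n => [|n ih] /=; first lra. have := es_ge0 n; rewrite expr2 => h; nra. Qed.
Lemma es_inc n : es n <= es n.+1.
Proof. rewrite /= expr2; have := sqr_ge0 (es n - 1); rewrite expr2; nra. Qed.

Lemma Es0 : Es 0 = 0. Proof. by rewrite /Es /= (m0r HA). Qed.
Lemma Es_rec n : Es n.+1 = hf *: (v + Es n ∗ Es n).
Proof. by rewrite /Es /= (mZr HA) (mDr HA) !(mA HA). Qed.

Lemma hf_ge0 : 0 <= hf. Proof. by rewrite invr_ge0 ler0n. Qed.
Lemma normhf : `|hf| = hf. Proof. by rewrite ger0_norm // hf_ge0. Qed.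
Lemma hfC (x : R) : (x / 2)%:C = x%:C * hf.
Proof. by rewrite rmorphM /= fmorphV /= rmorph_nat. Qed.

Lemma Es_bound n : `|Es n| <= (es n)%:C.
Proof.
elim: n => [|n ih]; first by rewrite Es0 normr0.
rewrite Es_rec normrZ normhf /= hfC mulrC ler_wpM2r ?hf_ge0 //.
rewrite rmorphD rmorphXn /= rmorph1; apply: le_trans (ler_normD _ _) _.
apply: lerD => //; apply: le_trans (norm_mul HA _ _) _.
rewrite expr2; apply: ler_pM => //.
Qed.


Lemma es_diff n : es n.+2 - es n.+1 = (es n.+1 + es n) * (es n.+1 - es n) / 2.
Proof.
have e2 : es n.+2 = (1 + es n.+1 ^+ 2) / 2 := erefl.
have e1 : es n.+1 = (1 + es n ^+ 2) / 2 := erefl.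
by rewrite e2 e1; ring.
Qed.

Lemma rs_diff n : rs n.+2 - rs n.+1 = (B * (es n.+1 - es n) + (rs n.+1 - rs n)) / 2.
Proof.
have e2 : rs n.+2 = B / 2 + (B * es n.+1 + rs n.+1) / 2 := erefl.
have e1 : rs n.+1 = B / 2 + (B * es n + rs n) / 2 := erefl.
rewrite e2 e1; ring.
Qed.

Lemma rs_inc n : rs n <= rs n.+1.
Proof.
rewrite -subr_ge0; elim: n => [|n ih]; first by rewrite /= mulr0 addr0 mul0r addr0 subr0 divr_ge0.
rewrite rs_diff; have := es_inc n; rewrite -subr_ge0 => h.
by apply: divr_ge0 => //; apply: addr_ge0 => //; apply: mulr_ge0.
Qed.

Lemma rs_le n : rs n <= 2 * B.
Proof.
elim: n => [|n ih] /=; first by rewrite mulr_ge0.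
have := es_le1 n; have := es_ge0 n => h1 h2; have b0 := B0; have m : B * es n <= B * 1 by rewrite ler_wpM2l. lra.
Qed.

Lemma lec1 (x : R) : x <= 1 -> x%:C <= 1.
Proof. by move=> h; rewrite -[1 : C]/(1%:C) lecR. Qed.

Lemma twoC : (2 : C) != 0. Proof. by rewrite pnatr_eq0. Qed.

Lemma dEs_bound n : `|Es n.+1 - Es n| <= (es n.+1 - es n)%:C.
Proof.
elim: n => [|n ih].
  rewrite Es_rec Es0 subr0 (m0l HA) addr0 normrZ normhf /=.
  have -> : ((1 + 0 ^+ 2) / 2 - 0 : R) = 1 / 2 by ring.
  by rewrite hfC mulrC ler_wpM2r ?hf_ge0 // rmorph1.
rewrite [Es n.+2]Es_rec [Es n.+1 in X in _ - X]Es_rec -scalerBr normrZ normhf.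
set X := Es n.+1; set Y := Es n.
have -> : (v + X ∗ X) - (v + Y ∗ Y) = X ∗ (X - Y) + (X - Y) ∗ Y.
  rewrite (mBr HA) (mBl HA) addrA subrK.
  by rewrite opprD addrA [v + _]addrC addrK.
rewrite es_diff hfC mulrC ler_wpM2r ?hf_ge0 //.
apply: le_trans (ler_normD _ _) _.
rewrite rmorphM rmorphD /= mulrDl.
apply: lerD; apply: le_trans (norm_mul HA _ _) _.
  by apply: ler_pM => //; exact: Es_bound.
by rewrite mulrC; apply: ler_pM => //; exact: Es_bound.
Qed.

Lemma Gs_bound n : `|Gs n| <= B%:C.
Proof.
elim: n => [|n ih]; first by rewrite normr0 ler0c.
rewrite /= normrZ normhf.
have -> : B%:C = hf * (B%:C + B%:C * 1).
  by rewrite mulr1 -mulr2n -[B%:C *+ 2]mulr_natl mulrA mulVf ?mul1r // pnatr_eq0.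
rewrite ler_wpM2l ?hf_ge0 //; apply: le_trans (ler_normD _ _) _.
apply: lerD => //; apply: le_trans (norm_mul HA _ _) _.
apply: ler_pM => //; apply: le_trans (Es_bound n) _.
exact/lec1/es_le1.
Qed.

Lemma dGs_bound n : `|Gs n.+1 - Gs n| <= (rs n.+1 - rs n)%:C.
Proof.
elim: n => [|n ih].
  rewrite /= subr0 !(m0r HA) addr0 normrZ normhf.
  have -> : (B / 2 + (B * 0 + 0) / 2 - 0 : R) = B / 2 by ring.
  by rewrite hfC mulrC; apply: ler_wpM2r => //; exact: hf_ge0.
rewrite [Gs n.+2]/= [Gs n.+1 in X in _ - X]/= -scalerBr normrZ normhf.
rewrite -/(Es n.+1) -/(Es n).
set X := Gs n.+1; set Y := Gs n; set P := Es n.+1; set Q := Es n.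
have -> : (v' + X ∗ P) - (v' + Y ∗ Q) = X ∗ (P - Q) + (X - Y) ∗ Q.
  rewrite (mBr HA) (mBl HA) addrA subrK.
  by rewrite opprD addrA [v' + _]addrC addrK.
rewrite rs_diff hfC mulrC ler_wpM2r ?hf_ge0 //.
apply: le_trans (ler_normD _ _) _.
rewrite rmorphD rmorphM /=.
apply: lerD; apply: le_trans (norm_mul HA _ _) _.
  by apply: ler_pM => //; [exact: Gs_bound | exact: dEs_bound].
rewrite -[X in _ <= X]mulr1; apply: ler_pM => //.
apply: le_trans (Es_bound n) _.
exact/lec1/es_le1.
Qed.


Lemma Gs_cvg : cvgn Gs.
Proof.
have : cvgn (series (fun k => Gs k.+1 - Gs k)).
  apply: majorant_cvg; [exact: rs_inc | exact: rs_le | exact: dGs_bound].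
suff -> : series (fun k => Gs k.+1 - Gs k) = Gs by [].
by apply/funext => n; rewrite /series /= telescope_sumr // subr0.
Qed.

Lemma conj_hf : (hf^*)%C = hf.
Proof. by rewrite conjc_inv conjc_nat. Qed.

Lemma sqrt_exists : exists G : A,
  [/\ f ∗ G = hf *: (v + (f ∗ G) ∗ (f ∗ G)), `|f ∗ G| <= 1,
      (forall X, X ∗ f = f ∗ X -> X ∗ v' = v' ∗ X -> X ∗ G = G ∗ X) &
      (star v = v -> star (f ∗ G) = f ∗ G)].
Proof.
have hG := Gs_cvg; set G := limn Gs in hG.
have hE : (fun n => Es n) @ \oo --> f ∗ G by apply: (cvg_mull HA).
exists G; split.
- apply: (@cvg_eq _ _ (fun n => Es n.+1)).
    by have := hE; rewrite -cvg_shiftS.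
  have -> : (fun n => Es n.+1) = (fun n => hf *: (v + Es n ∗ Es n)).
    by apply/funext => n; rewrite Es_rec.
  apply: cvgZ; first exact: cvg_cst.
  by apply: cvgD; [exact: cvg_cst | exact: (cvg_mul HA)].
- apply: (lim_norm_le ler01 hE) => n.
  exact: le_trans (Es_bound n) (lec1 (es_le1 n)).
- move=> X hXf hXv.
  have hc : forall n, X ∗ Gs n = Gs n ∗ X.
    elim=> [|n ih] /=; first by rewrite (m0r HA) (m0l HA).
    rewrite (mZr HA) (mZl HA) (mDr HA) (mDl HA) hXv; congr (_ *: (_ + _)).
    rewrite !(mA HA) ih -!(mA HA) [X ∗ (f ∗ _)](mA HA) hXf -(mA HA) ih.
    by rewrite !(mA HA).
  apply: (@cvg_eq _ _ (fun n => X ∗ Gs n)); first exact: (cvg_mull HA).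
  have -> : (fun n => X ∗ Gs n) = (fun n => Gs n ∗ X) by apply/funext => n.
  exact: (cvg_mulr HA).
- move=> sv.
  have hs : forall n, star (Es n) = Es n.
    elim=> [|n ih]; first by rewrite Es0 (s0 HA).
    by rewrite Es_rec (sZ HA) conj_hf (sD HA) sv (sM HA) ih.
  apply: (@cvg_eq _ _ (fun n => star (Es n))); first exact: (cvg_star HA).
  have -> : (fun n => star (Es n)) = (fun n => Es n) by apply/funext => n.
  exact: hE.
Qed.

End Sqrt.

Section Main.
Variables (R : realType) (A : completeNormedModType (complex R)).
Variables (mul : A -> A -> A) (star : A -> A).
Hypothesis HA : is_cstar_algebra mul star.
Local Notation "a ∗ b" := (mul a b) (at level 40, left associativity).
Local Notation C := (complex R).
Local Notation hf := ((2%:R)^-1 : C).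

Lemma mMnl x y n : (x *+ n) ∗ y = (x ∗ y) *+ n.
Proof. elim: n => [|n ih]; first by rewrite !mulr0n (m0l HA). by rewrite !mulrS (mDl HA) ih. Qed.
Lemma mMnr x y n : x ∗ (y *+ n) = (x ∗ y) *+ n.
Proof. elim: n => [|n ih]; first by rewrite !mulr0n (m0r HA). by rewrite !mulrS (mDr HA) ih. Qed.
Lemma sMn x n : star (x *+ n) = star x *+ n.
Proof. elim: n => [|n ih]; first by rewrite !mulr0n (s0 HA). by rewrite !mulrS (sD HA) ih. Qed.

Lemma lin4 (V : zmodType) (X Y Z : V) :
  (X - Y) *+ 4 + (Y *+ 2 *+ 2 - X *+ 2 - (X *+ 2 - Z)) = Z.
Proof.
have e1 : Y *+ 2 *+ 2 = Y *+ 4 by rewrite -mulrnA.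
have e2 : X *+ 4 = X *+ 2 + X *+ 2 by rewrite -mulrnDr.
rewrite e1 mulrnBl e2; move: (X *+ 2) (Y *+ 4) => a b.
by rewrite !addrA subrK addrK subKr.
Qed.

Lemma hf2 (x : A) : hf *: (x *+ 2) = x.
Proof. by rewrite -[x *+ 2]scaler_nat scalerA mulVf ?scale1r // pnatr_eq0. Qed.

Lemma hfx (y : C) : hf * (y + y) = y.
Proof.
rewrite (_ : y + y = 2%:R * y); last by rewrite mulr_natl mulr2n.
by rewrite mulrA mulVf ?mul1r // pnatr_eq0.
Qed.

Lemma conj_i : ('i^*)%C = - 'i :> C.
Proof. by apply/eqP; rewrite eq_complex /= oppr0 !eqxx. Qed.

Lemma W_expand (s : C) b c : (s^*)%C = - s -> s * s = -1 ->
  star c ∗ b = star b ∗ c ->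
  star (b + s *: c) ∗ (b + s *: c) = star b ∗ b + star c ∗ c.
Proof.
move=> hs hss k1.
rewrite (sD HA) (sZ HA) hs scaleNr (mBl HA) !(mDr HA) !(mZr HA) !(mZl HA).
rewrite scalerA hss scaleN1r k1.
by rewrite opprD addrA addrK opprK.
Qed.

Lemma pyth (P p a : A) : star P = P -> star p = p -> P ∗ p = p ∗ P ->
  P ∗ P = (p - p ∗ p) *+ 4 -> `|P ∗ a| <= `|a|.
Proof.
move=> sP sp cP PP.
set c := (p ∗ a) *+ 2 - a; set b := P ∗ a.
have sb : star b = star a ∗ P by rewrite /b (sM HA) sP.
have sc : star c = (star a ∗ p) *+ 2 - star a by rewrite /c (sB HA) sMn (sM HA) sp.
have k1 : star c ∗ b = star b ∗ c.
  rewrite sc sb /b /c (mBl HA) (mBr HA) mMnl mMnr.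
  by rewrite !(mA HA) -[star a ∗ P ∗ p](mA HA) cP !(mA HA).
have k2 : star b ∗ b + star c ∗ c = star a ∗ a.
  rewrite sb sc /b /c (mA HA) -[star a ∗ P ∗ P](mA HA) PP.
  rewrite ?(mBl HA) ?(mBr HA) ?mMnl ?mMnr ?(mBl HA) ?(mBr HA) ?mMnl ?mMnr ?(mBl HA) ?(mBr HA) !(mA HA).
  set X := star a ∗ p ∗ a; set Y := star a ∗ p ∗ p ∗ a; set Z := star a ∗ a.
  exact: lin4.
have hW : forall s : C, (s^*)%C = - s -> s * s = -1 -> `|b + s *: c| = `|a|.
  move=> s hs hss; have := W_expand hs hss k1; rewrite k2 => e.
  have : `|b + s *: c| ^+ 2 = `|a| ^+ 2 by rewrite -!(cstar HA) e.
  by move/eqP; rewrite eqrXn2 // => /eqP.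
have h1 : `|b + 'i *: c| = `|a| by apply: hW; [exact: conj_i | rewrite -expr2 sqr_i].
have h2 : `|b + (- 'i) *: c| = `|a|.
  apply: hW; first by apply/eqP; rewrite eq_complex /= !oppr0 !opprK !eqxx.
  by rewrite mulrNN -expr2 sqr_i.
have -> : b = hf *: ((b + 'i *: c) + (b + (- 'i) *: c)).
  by rewrite scaleNr addrACA subrr addr0 hf2.
rewrite normrZ normhf; apply: (@le_trans _ _ (hf * (`|a| + `|a|))).
  by rewrite ler_wpM2l ?hf_ge0 // -{1}h1 -h2 ler_normD.
by rewrite hfx.
Qed.


Lemma conj_real (z : C) : 0 <= z -> (z^*)%C = z.
Proof.
move=> hz; have := ger0_Im hz; case: z hz => a b /= _ ->.
by apply/eqP; rewrite eq_complex /= oppr0 !eqxx.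
Qed.

Lemma fix2 (E v : A) : E = hf *: (v + E ∗ E) -> E ∗ E = E *+ 2 - v.
Proof.
move=> e; have : E *+ 2 = v + E ∗ E by rewrite {1}e scalerMnr hf2.
by move=> ->; rewrite [v + _]addrC addrK.
Qed.

Lemma norm_le1 (P : A) : star P = P -> (forall a, `|P ∗ a| <= `|a|) -> `|P| <= 1.
Proof.
move=> sP hP; have := hP P; rewrite (norm_sa HA sP) expr2.
have [->|P0] := eqVneq `|P| 0; first by rewrite ler01.
by rewrite -{3}[`|P|]mul1r ler_pM2r // lt_def P0 normr_ge0.
Qed.

Lemma comm_sq (X h : A) : X ∗ h = h ∗ X -> X ∗ (h ∗ h) = h ∗ h ∗ X.
Proof. by move=> c; rewrite (mA HA) c -(mA HA) c (mA HA). Qed.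

Lemma lin5 (V : zmodType) (a z b w : V) : a - z - (b - w) = a - b - (z - w).
Proof. by rewrite !opprB !addrA [a - z + w]addrAC [a - b + w]addrAC addrAC. Qed.

Lemma Kclosed (e : A) : closed [set z | e ∗ z = z].
Proof.
have -> : [set z | e ∗ z = z] = (fun z => e ∗ z - z) @^-1` [set 0].
  apply/funext => z /=; apply/propext; split => [->|/eqP]; first by rewrite subrr.
  by rewrite subr_eq0 => /eqP.
apply: preimage_closed; last first.
  exact: (accessible_closed_set1 (hausdorff_accessible (@norm_hausdorff _ A))).
move=> z _; apply/cvgrPdist_lt => eps eps0.
have k0 : 0 < `|e| + 1 by rewrite ltr_wpDl.
have /cvgrPdist_lt hz := (@cvg_id _ (nbhs z)).
move: (hz _ (divr_gt0 eps0 k0)); apply: filterS => w hw.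
have -> : e ∗ z - z - (e ∗ w - w) = e ∗ (z - w) - (z - w).
  by rewrite (mBr HA) lin5.
apply: le_lt_trans (ler_normB _ _) _.
apply: (@le_lt_trans _ _ ((`|e| + 1) * `|z - w|)).
  by rewrite mulrDl mul1r lerD2r (norm_mul HA).
by rewrite mulrC -ltr_pdivlMr.
Qed.

Lemma lin2 (V : zmodType) (X Q Y : V) : X - Q - (Q - (Q *+ 2 - Y)) = X - Y.
Proof. by rewrite mulr2n opprB [Q + Q - Y - Q]addrAC addrK addrA subrK. Qed.

Lemma lin3 (V : zmodType) (X Y E : V) : Y *+ 2 - (E - (X - Y) *+ 2) = X *+ 2 - E.
Proof. by rewrite mulrnBl opprB addrA [Y *+ 2 + _]addrC subrK. Qed.


Lemma main_lemma (I J : set A) : closed_right_ideal mul J ->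
  topologically_essential mul J -> right_ideal mul I -> nonzero_set I ->
  meets_nontrivially J I.
Proof.
move=> hJ hte [I0 [Iadd [Iscal Imul]]] [x [Ix x0]].
set y := x ∗ star x.
have ny : `|y| = `|x| ^+ 2.
  by rewrite /y -{1}[x](sK HA) (cstar HA) (norm_star HA).
have y0 : `|y| != 0 by rewrite ny expf_neq0 // normr_eq0; apply/eqP.
set k := `|y|^-1.
have k0 : 0 <= k by rewrite invr_ge0 normr_ge0.
set h := k *: y.
have sh : star h = h by rewrite /h (sZ HA) conj_real // /y (sM HA) (sK HA).
have nh : `|h| = 1 by rewrite /h normrZ ger0_norm // mulVf.
have hI : forall b, I (h ∗ b).
  move=> b; rewrite /h /y (mZl HA) -(mA HA); apply: Iscal; exact: Imul.
set p := h ∗ h.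
have sp : star p = p by rewrite /p (sM HA) sh.
have np : `|p| = 1 by rewrite /p (norm_sa HA sh) nh expr1n.
(* F = 1 - sqrt (1 - p) *)
have hB1 : `|h| <= (1 : R)%:C by rewrite nh.
have hv1 : `|h ∗ h| <= 1 by rewrite np.
have [G1 [eF nF cF sF]] := sqrt_exists HA ler01 hB1 hv1.
set F := h ∗ G1 in eF nF sF.
have chG : h ∗ G1 = G1 ∗ h by apply: cF.
have cFh : F ∗ h = h ∗ F by rewrite /F -(mA HA) -chG.
have sFF : star F = F by apply: sF.
have FF : F ∗ F = F *+ 2 - p by apply: fix2.
set P := (h - h ∗ F) *+ 2.
have cPh : (h - h ∗ F) ∗ h = h ∗ (h - h ∗ F).
  by rewrite (mBl HA) (mBr HA) -(mA HA) cFh (mA HA).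
have PP : P ∗ P = (p - p ∗ p) *+ 4.
  rewrite /P mMnl mMnr -mulrnA (_ : (2 * 2)%N = 4%N) //; congr (_ *+ _).
  rewrite (mBl HA) !(mBr HA) -/p (mA HA) -/p.
  have -> : h ∗ F ∗ h = p ∗ F by rewrite -(mA HA) cFh (mA HA).
  have -> : h ∗ F ∗ (h ∗ F) = p ∗ (F ∗ F).
    by rewrite (mA HA) -[h ∗ F ∗ h](mA HA) cFh (mA HA) -(mA HA).
  by rewrite FF (mBr HA) mMnr lin2.
have sP : star P = P.
  by rewrite /P sMn (sB HA) (sM HA) sFF sh cFh.
have cP : P ∗ p = p ∗ P.
  rewrite /P mMnl mMnr; congr (_ *+ _); apply: comm_sq; exact: cPh.
have nP : `|P| <= 1 by apply: (norm_le1 sP) => a; exact: (pyth a sP sp cP PP).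
set v := P ∗ P.
have hv : `|v| <= 1.
  by rewrite /v (norm_sa HA sP) expr_le1.
(* E = 1 - sqrt (1 - v) *)
set v' := (h - h ∗ p) *+ 4.
have hv' : h ∗ v' = v.
  by rewrite /v' /v PP mMnr (mBr HA) (mA HA).
have nv' : `|v'| <= (8 : R)%:C.
  rewrite /v' normrMn rmorph_nat.
  have b : `|h - h ∗ p| <= 2%:R.
    apply: le_trans (ler_normB _ _) _; rewrite nh.
    apply: le_trans (lerD (lexx 1) (norm_mul HA _ _)) _.
    by rewrite nh np mulr1.
  apply: le_trans (ler_wMn2r 4 b) _.
  by rewrite -mulr_natr mul1r -mulrnA.
have hv2 : `|h ∗ v'| <= 1 by rewrite hv'.
have [G2 [eE nE cE _]] := sqrt_exists HA (ler0n _ 8) nv' hv2.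
set E := h ∗ G2 in eE nE.
have chv : h ∗ v' = v' ∗ h.
  rewrite /v' mMnl mMnr; congr (_ *+ _).
  by rewrite (mBl HA) (mBr HA) /p !(mA HA).
have chG2 : h ∗ G2 = G2 ∗ h by apply: cE.
have cEh : E ∗ h = h ∗ E by rewrite /E -(mA HA) -chG2.
have cEp : E ∗ p = p ∗ E by apply: comm_sq.
rewrite hv' in eE.
have EE : E ∗ E = E *+ 2 - v by apply: fix2.
set e := p + hf *: E.
set K := [set z | e ∗ z = z].
have Kcri : closed_right_ideal mul K.
  split; last exact: Kclosed.
  split; first by rewrite /K /= (m0r HA).
  split; first by move=> z1 z2; rewrite /K /= (mDr HA) => -> ->.
  split; first by move=> a z; rewrite /K /= (mZr HA) => ->.
  by move=> z a; rewrite /K /= (mA HA) => ->.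
set z0 := p *+ 2 - E.
have Kz0 : K z0.
  rewrite /K /= /e /z0 (mDl HA) (mZl HA) !(mBr HA) !mMnr cEp EE.
  rewrite scalerBr hf2 scalerBr hf2 addrA subrK.
  by rewrite /v PP -[4%N]/(2 * 2)%N mulrnA hf2 lin3.
have z00 : z0 <> 0.
  move=> /eqP; rewrite subr_eq0 => /eqP hE.
  move: nE; rewrite -/E -hE normrMn np.
  by rewrite -[1 : C]/(1%:R) ler_nat.
have [z [Jz [Kz zne]]] := hte K Kcri (ex_intro _ z0 (conj Kz0 z00)).
exists z; split => //; split => //.
rewrite -Kz /e (mDl HA) (mZl HA) /p -(mA HA) /E -(mA HA).
by apply: Iadd; [exact: hI | apply: Iscal; exact: hI].
Qed.

End Main.

Unset Implicit Arguments.

Theorem mainTheorem1 (R : realType) (A : completeNormedModType (complex R))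
    (mul : A -> A -> A) (star : A -> A) (J : set A) :
  is_cstar_algebra mul star ->
  closed_right_ideal mul J ->
  topologically_essential mul J ->
  essential mul J.
Proof.
move=> HA hJ hte I hI hne.
exact: (main_lemma HA hJ hte hI hne).
Qed.
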